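(* Let $r>0$, $\delta>0$, $R:=r/\delta$, and suppose $R+\tfrac12\in\mathbb{Z}$. Then for every unit-norm tight frame $\mathcal{F}$ of $\mathbb{R}^2$, $$\mathcal{E}_\delta(r,\mathcal{F})\ge \frac{32}{3\pi^{5/2}}\,\frac{\delta^{3/2}}{\sqrt r}.$$
   Context: A finite family $\mathcal{F}=\{e_j\}_{j=1}^N\subset\mathbb{R}^2$ is a unit-norm tight frame if $\|e_j\|=1$ for all $j$ and $\sum_j e_je_j^T=\frac{N}{2}I_2$. For $\delta>0$, $Q_\delta(t):=\delta\lfloor t/\delta+1/2\rfloor$, and $E_\delta(x,\mathcal{F}):=\bigl\|x-\frac{2}{N}\sum_{j=1}^N Q_\delta(\langle x,e_j\rangle)e_j\bigr\|$ (Euclidean norm). For $r>0$ set $x_\psi:=r[\cos\psi,\sin\psi]^T$ and $$\mathcal{E}_\delta(r,\mathcal{F}):=\Bigl(\int_0^{2\pi}E_\delta(x_\psi,\mathcal{F})^2\,d\psi\Bigr)^{1/2}.$$ *)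

(* Defs.v *)
From Stdlib Require Import Reals Lra Lia ZArith List.
Open Scope R_scope.

(* floor function: Int_part x = up x - 1 is the greatest integer <= x *)
Definition Rfloor (x : R) : R := IZR (up x - 1).

Definition Qd (delta t : R) : R := delta * Rfloor (t / delta + / 2).

Definition sumN (N : nat) (f : nat -> R) : R :=
  fold_right Rplus 0 (map f (seq 0 N)).

(* A family {e_j}_{j<N} in R^2, given by coordinate functions ex, ey,
   is a unit-norm tight frame: ||e_j|| = 1 and sum_j e_j e_j^T = N/2 I_2. *)
Definition is_UNTF (N : nat) (ex ey : nat -> R) : Prop :=
  (forall j, (j < N)%nat -> sqrt (ex j ^ 2 + ey j ^ 2) = 1) /\
  sumN N (fun j => ex j * ex j) = INR N / 2 /\
  sumN N (fun j => ex j * ey j) = 0 /\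
  sumN N (fun j => ey j * ex j) = 0 /\
  sumN N (fun j => ey j * ey j) = INR N / 2.

Definition Edelta (delta : R) (N : nat) (ex ey : nat -> R) (x1 x2 : R) : R :=
  let c := fun j => Qd delta (x1 * ex j + x2 * ey j) in
  let y1 := x1 - 2 / INR N * sumN N (fun j => c j * ex j) in
  let y2 := x2 - 2 / INR N * sumN N (fun j => c j * ey j) in
  sqrt (y1 ^ 2 + y2 ^ 2).

Definition Esq_integrand (delta r : R) (N : nat) (ex ey : nat -> R) (psi : R) : R :=
  Edelta delta N ex ey (r * cos psi) (r * sin psi) ^ 2.

(* Main.v *)
Require Import Defs.
From Stdlib Require Import Reals Lra Lia ZArith List Psatz FunctionalExtensionality RList RiemannInt_SF RiemannInt Arith Factorial.
Open Scope R_scope.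

Lemma adapted_comp (g f : R -> R) a b l lf :
  adapted_couple f a b l lf -> adapted_couple (fun x => g (f x)) a b l (map g lf).
Proof.
  unfold adapted_couple; intros; decompose [and] H; clear H;
    repeat split; try assumption.
  - symmetry ; rewrite H3; rewrite RList_P18; reflexivity.
  - intros; unfold constant_D_eq, open_interval;
    unfold constant_D_eq, open_interval in H5; intros;
      rewrite (H5 _ H _ H4); rewrite RList_P12;
        [ reflexivity | rewrite H3 in H; simpl in H; apply H ].
Qed.

Definition SF_comp a b (g : R -> R) (phi : StepFun a b) : StepFun a b :=
  mkStepFun (existT _ (subdivision phi)
     (existT _ (map g (subdivision_val phi)) (adapted_comp g _ _ _ _ _ (StepFun_P1 phi)))).

Definition SF_cte a b c : StepFun a b := mkStepFun (StepFun_P4 a b c).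

Definition SF_lin a b (l : R) (f g : StepFun a b) : StepFun a b :=
  mkStepFun (StepFun_P28 l f g).

Lemma RI_comp_lip (f g : R -> R) a b L :
  0 <= L -> (forall x y, Rabs (g x - g y) <= L * Rabs (x - y)) ->
  Riemann_integrable f a b -> Riemann_integrable (fun x => g (f x)) a b.
Proof.
  intros HL Hg pr eps.
  assert (Hp : 0 < eps / (L + 1)).
  { apply Rdiv_lt_0_compat; [apply cond_pos | lra]. }
  destruct (pr (mkposreal _ Hp)) as [phi [psi [H1 H2]]].
  exists (@SF_comp a b g phi).
  exists (@SF_lin a b L (SF_cte a b 0) psi).
  split.
  - intros t Ht. simpl. unfold fct_cte.
    eapply Rle_trans. apply Hg.
    specialize (H1 t Ht). nra.
  - unfold SF_lin. rewrite StepFun_P30. unfold SF_cte. rewrite StepFun_P18.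
    simpl in H2. rewrite Rmult_0_l, Rplus_0_l, Rabs_mult, (Rabs_pos_eq L HL).
    assert (Hl : L * Rabs (RiemannInt_SF psi) <= L * (eps / (L+1))) by nra.
    assert (L * (eps/(L+1)) < eps).
    { pose proof (cond_pos eps). apply Rmult_lt_reg_r with (L+1); [lra|].
      field_simplify; lra. }
    lra.
Qed.

Lemma SF_RI a b (phi : StepFun a b) : Riemann_integrable phi a b.
Proof.
  intro eps. exists phi. exists (SF_cte a b 0). split.
  - intros; simpl; unfold fct_cte. rewrite Rminus_diag, Rabs_R0; lra.
  - unfold SF_cte; rewrite StepFun_P18, Rmult_0_l, Rabs_R0. apply cond_pos.
Qed.

Lemma RI_open_ext (f g : R -> R) a b :
  a <= b -> (forall x, a < x < b -> f x = g x) ->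
  Riemann_integrable g a b -> Riemann_integrable f a b.
Proof.
  intros Hab Hfg pr.
  assert (HS : IsStepFun (fun x => f x - g x) a b).
  { exists (a :: b :: nil). exists (0 :: nil).
    unfold adapted_couple; repeat split.
    - unfold ordered_Rlist; intros i Hi; simpl in Hi.
      destruct i; [simpl; lra | lia].
    - simpl; unfold Rmin; destruct (Rle_dec a b); lra.
    - simpl; unfold Rmax; destruct (Rle_dec a b); lra.
    - intros i Hi; simpl in Hi. destruct i; [|lia].
      unfold constant_D_eq, open_interval; simpl; intros x Hx.
      rewrite Hfg; [ring | lra]. }
  apply Riemann_integrable_ext with (f := fun x => g x + 1 * (f x - g x)).
  { intros; ring. }
  apply RiemannInt_P10; [exact pr|].
  exact (SF_RI a b (mkStepFun HS)).
Qed.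

Lemma RI_open_ext_val (f g : R -> R) a b (prf : Riemann_integrable f a b)
  (prg : Riemann_integrable g a b) :
  a <= b -> (forall x, a < x < b -> f x = g x) -> RiemannInt prf = RiemannInt prg.
Proof. intros; apply RiemannInt_P18; auto. Qed.

Lemma RI_ext_val (f g : R -> R) a b (prf : Riemann_integrable f a b)
  (prg : Riemann_integrable g a b) :
  (forall x, f x = g x) -> RiemannInt prf = RiemannInt prg.
Proof.
  intros H. assert (f = g) by (apply functional_extensionality; auto).
  subst. apply RiemannInt_P5.
Qed.

Lemma FTC_expl (f F : R -> R) a b :
  a <= b -> (forall x, a <= x <= b -> continuity_pt f x) ->
  (forall x, a <= x <= b -> derivable_pt_lim F x (f x)) ->
  exists pr : Riemann_integrable f a b, RiemannInt pr = F b - F a.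
Proof.
  intros Hab Hc Hd.
  exists (continuity_implies_RiemannInt Hab Hc).
  rewrite (RiemannInt_P20 Hab (FTC_P1 Hab Hc)).
  assert (A1 := RiemannInt_P29 Hab Hc).
  assert (A2 : antiderivative f F a b).
  { split; [|exact Hab]. intros x Hx.
    exists (exist _ (f x) (Hd x Hx)). reflexivity. }
  destruct (antiderivative_Ucte _ _ _ _ _ A1 A2) as [c Hc'].
  rewrite (Hc' b), (Hc' a); try lra.
Qed.

Lemma adapted_shift (f : R -> R) a b l lf c :
  adapted_couple f a b l lf ->
  adapted_couple (fun x => f (x + c)) (a - c) (b - c) (map (fun x => x - c) l) lf.
Proof.
  unfold adapted_couple; intros [H0 [H1 [H2 [H3 H5]]]].
  assert (Hlen : (0 < length l)%nat) by (rewrite H3; lia).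
  repeat split.
  - unfold ordered_Rlist in *; intros i Hi; rewrite RList_P18 in Hi.
    rewrite !RList_P12 by lia. specialize (H0 i Hi); lra.
  - rewrite RList_P12 by lia. rewrite H1. unfold Rmin.
    destruct (Rle_dec a b); destruct (Rle_dec (a - c) (b - c)); lra.
  - rewrite RList_P18, RList_P12 by lia. rewrite H2. unfold Rmax.
    destruct (Rle_dec a b); destruct (Rle_dec (a - c) (b - c)); lra.
  - rewrite RList_P18; exact H3.
  - intros i Hi; rewrite RList_P18 in Hi.
    unfold constant_D_eq, open_interval in *; intros x Hx.
    rewrite !RList_P12 in Hx by lia.
    apply H5; [exact Hi | lra].
Qed.

Lemma Int_SF_shift c : forall lf l, Int_SF lf (map (fun x => x - c) l) = Int_SF lf l.
Proof.
  induction lf as [|v lf IH]; intros l; [reflexivity|].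
  destruct l as [|x [|y k]]; simpl; try reflexivity.
  specialize (IH (y :: k)). simpl in IH. rewrite IH. ring.
Qed.

Definition SF_shift a b c (phi : StepFun a b) : StepFun (a - c) (b - c) :=
  mkStepFun (existT _ (map (fun x => x - c) (subdivision phi))
     (existT _ (subdivision_val phi) (adapted_shift _ _ _ _ _ c (StepFun_P1 phi)))).

Lemma SF_shift_int a b c (phi : StepFun a b) :
  RiemannInt_SF (SF_shift a b c phi) = RiemannInt_SF phi.
Proof.
  unfold RiemannInt_SF; simpl.
  unfold subdivision_val, subdivision; simpl.
  rewrite Int_SF_shift.
  destruct (Rle_dec (a - c) (b - c)); destruct (Rle_dec a b); try lra; reflexivity.
Qed.

Definition RI_shift (f : R -> R) a b c (pr : Riemann_integrable f a b) :
  Riemann_integrable (fun x => f (x + c)) (a - c) (b - c).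
Proof.
  intro eps.
  exists (SF_shift a b c (projT1 (pr eps))).
  exists (SF_shift a b c (proj1_sig (projT2 (pr eps)))).
  destruct (proj2_sig (projT2 (pr eps))) as [H1 H2].
  split.
  - intros t Ht. simpl. apply H1. clear H1 H2.
    unfold Rmin, Rmax in *.
    destruct (Rle_dec (a - c) (b - c)); destruct (Rle_dec a b); lra.
  - rewrite SF_shift_int. exact H2.
Defined.

Lemma RI_shift_val (f : R -> R) a b c (pr : Riemann_integrable f a b) :
  RiemannInt (RI_shift f a b c pr) = RiemannInt pr.
Proof.
  unfold RiemannInt.
  destruct (RiemannInt_exists (RI_shift f a b c pr) RinvN RinvN_cv) as [x1 H1].
  destruct (RiemannInt_exists pr RinvN RinvN_cv) as [x2 H2].
  apply UL_sequence with (1 := H1).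
  intros eps Heps. destruct (H2 eps Heps) as [N0 HN]. exists N0.
  intros n Hn. specialize (HN n Hn).
  unfold phi_sequence in *. simpl. rewrite SF_shift_int. exact HN.
Qed.

Lemma RI_translate (f : R -> R) a b c a' b' (pr : Riemann_integrable f a b) :
  (forall x, f (x + c) = f x) -> a' = a - c -> b' = b - c ->
  exists pr' : Riemann_integrable f a' b', RiemannInt pr' = RiemannInt pr.
Proof.
  intros Hp Ha Hb; subst.
  pose (p1 := RI_shift f a b c pr).
  assert (p2 : Riemann_integrable f (a - c) (b - c)).
  { apply Riemann_integrable_ext with (2 := p1). intros; apply Hp. }
  exists p2. rewrite <- (RI_shift_val f a b c pr). apply RI_ext_val. intros; symmetry; apply Hp.
Qed.

Lemma RI_sub (f : R -> R) A B x y :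
  Riemann_integrable f A B -> A <= x <= B -> A <= y <= B -> Riemann_integrable f x y.
Proof.
  intros pr Hx Hy.
  destruct (Rle_dec x y).
  - apply RiemannInt_P22 with B; [|lra]. apply RiemannInt_P23 with A; [exact pr|lra].
  - apply RiemannInt_P1. apply RiemannInt_P22 with B; [|lra].
    apply RiemannInt_P23 with A; [exact pr|lra].
Qed.

Lemma RI_periodic_window (f : R -> R) T a w (pr : Riemann_integrable f a (a + T)) :
  (forall x, f (x + T) = f x) -> 0 <= T -> a - T <= w <= a + T ->
  exists pr' : Riemann_integrable f w (w + T), RiemannInt pr' = RiemannInt pr.
Proof.
  intros Hp HT Hw.
  assert (Hm : forall x, f (x + - T) = f x).
  { intros x. rewrite <- (Hp (x + - T)). f_equal; ring. }
  destruct (RI_translate f a (a + T) T (a - T) a pr Hp) as [p1 _]; try ring.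
  destruct (RI_translate f a (a + T) (- T) (a + T) (a + T + T) pr Hm) as [p2 _]; try ring.
  assert (pbig : Riemann_integrable f (a - T) (a + T + T)).
  { apply RiemannInt_P24 with (a + T); [|exact p2]. apply RiemannInt_P24 with a; assumption. }
  assert (pw : Riemann_integrable f w (w + T)) by (apply RI_sub with (1 := pbig); lra).
  exists pw.
  assert (pwa : Riemann_integrable f w a) by (apply RI_sub with (1 := pbig); lra).
  assert (paw : Riemann_integrable f a (w + T)) by (apply RI_sub with (1 := pbig); lra).
  assert (pw2 : Riemann_integrable f (w + T) (a + T)) by (apply RI_sub with (1 := pbig); lra).
  rewrite <- (RiemannInt_P26 pwa paw pw).
  rewrite <- (RiemannInt_P26 paw pw2 pr).
  destruct (RI_translate f (w + T) (a + T) T w a pw2 Hp) as [p3 Hv]; try ring.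
  rewrite (RiemannInt_P5 pwa p3), Hv. ring.
Qed.

Fixpoint ssum (v : nat -> R) (n : nat) : R :=
  match n with O => 0 | S n => ssum v n + v n end.

Lemma RI_chain (f : R -> R) (b v : nat -> R) (n : nat) :
  (forall m, (m < n)%nat -> exists pr : Riemann_integrable f (b m) (b (S m)), RiemannInt pr >= v m) ->
  exists pr : Riemann_integrable f (b 0%nat) (b n), RiemannInt pr >= ssum v n.
Proof.
  induction n as [|n IH]; intros H.
  - exists (RiemannInt_P7 f (b 0%nat)). simpl. rewrite RiemannInt_P9. lra.
  - destruct IH as [p1 H1]. { intros m Hm; apply H; lia. }
    destruct (H n) as [p2 H2]. lia.
    exists (RiemannInt_P24 p1 p2). rewrite <- (RiemannInt_P26 p1 p2). simpl. lra.
Qed.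

Lemma ssum_nonneg v n : (forall m, (m < n)%nat -> 0 <= v m) -> 0 <= ssum v n.
Proof.
  induction n; simpl; intros H; [lra|].
  assert (0 <= ssum v n) by (apply IHn; intros; apply H; lia).
  assert (0 <= v n) by (apply H; lia). lra.
Qed.

Lemma RI_chain0 (f : R -> R) (b : nat -> R) (n : nat) :
  (forall m, (m < n)%nat -> exists pr : Riemann_integrable f (b m) (b (S m)), RiemannInt pr >= 0) ->
  exists pr : Riemann_integrable f (b 0%nat) (b n), RiemannInt pr >= 0.
Proof.
  intros H. destruct (RI_chain f b (fun _ => 0) n H) as [p Hp].
  exists p. assert (0 <= ssum (fun _ => 0) n) by (apply ssum_nonneg; intros; lra). lra.
Qed.

Lemma RI_join (f : R -> R) a b c x y :
  (exists pr : Riemann_integrable f a b, RiemannInt pr >= x) ->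
  (exists pr : Riemann_integrable f b c, RiemannInt pr >= y) ->
  exists pr : Riemann_integrable f a c, RiemannInt pr >= x + y.
Proof.
  intros [p1 H1] [p2 H2]. exists (RiemannInt_P24 p1 p2).
  rewrite <- (RiemannInt_P26 p1 p2). lra.
Qed.

Lemma dl_const c x : derivable_pt_lim (fun _ => c) x 0.
Proof. apply derivable_pt_lim_const. Qed.
Lemma dl_id x : derivable_pt_lim (fun y => y) x 1.
Proof. apply derivable_pt_lim_id. Qed.
Lemma dl_plus f g x a b v : derivable_pt_lim f x a -> derivable_pt_lim g x b -> a + b = v ->
  derivable_pt_lim (fun y => f y + g y) x v.
Proof. intros; subst; apply (derivable_pt_lim_plus f g); auto. Qed.
Lemma dl_minus f g x a b v : derivable_pt_lim f x a -> derivable_pt_lim g x b -> a - b = v ->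
  derivable_pt_lim (fun y => f y - g y) x v.
Proof. intros; subst; apply (derivable_pt_lim_minus f g); auto. Qed.
Lemma dl_mult f g x a b v : derivable_pt_lim f x a -> derivable_pt_lim g x b ->
  a * g x + f x * b = v -> derivable_pt_lim (fun y => f y * g y) x v.
Proof. intros; subst; apply (derivable_pt_lim_mult f g); auto. Qed.
Lemma dl_scal c f x a v : derivable_pt_lim f x a -> c * a = v -> derivable_pt_lim (fun y => c * f y) x v.
Proof. intros; subst; apply (derivable_pt_lim_scal f); auto. Qed.
Lemma dl_sin f x a v : derivable_pt_lim f x a -> cos (f x) * a = v -> derivable_pt_lim (fun y => sin (f y)) x v.
Proof.
  intros H E; subst. apply (derivable_pt_lim_comp f sin); auto. apply derivable_pt_lim_sin.
Qed.
Lemma dl_cos f x a v : derivable_pt_lim f x a -> - sin (f x) * a = v -> derivable_pt_lim (fun y => cos (f y)) x v.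
Proof.
  intros H E; subst. replace (- sin (f x) * a) with (-sin (f x) * a) by ring.
  apply (derivable_pt_lim_comp f cos); auto. apply derivable_pt_lim_cos.
Qed.

Lemma incr_from_deriv (f f' : R -> R) :
  (forall x, derivable_pt_lim f x (f' x)) -> (forall x, 0 <= f' x) ->
  forall x y, x <= y -> f x <= f y.
Proof.
  intros Hd Hp.
  set (pr := fun x => exist (fun l => derivable_pt_lim f x l) (f' x) (Hd x) : derivable_pt f x).
  assert (Hi : increasing f).
  { apply (nonneg_derivative_1 f pr). intros x; simpl. apply Hp. }
  exact Hi.
Qed.

Definition Fq (r q phi : R) : R := r * r * (phi * / 2 + sin (2 * phi) * / 4) - q * r * sin phi.
Definition Kf (r q phi : R) : R := r * cos phi * (r * cos phi - q).

Lemma Fq_deriv r q x : derivable_pt_lim (Fq r q) x (Kf r q x).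
Proof.
  unfold Fq, Kf.
  eapply dl_minus.
  - eapply dl_scal. eapply dl_plus.
    + eapply dl_mult. apply dl_id. apply dl_const. reflexivity.
    + eapply dl_mult. eapply dl_sin. eapply dl_mult. apply dl_const. apply dl_id.
      reflexivity. reflexivity. apply dl_const. reflexivity.
    + reflexivity.
    + reflexivity.
  - eapply dl_scal. eapply dl_sin. apply dl_id. reflexivity. reflexivity.
  - rewrite cos_2a_cos. field.
Qed.

Lemma Kf_RI r q a b : a <= b ->
  exists pr : Riemann_integrable (Kf r q) a b, RiemannInt pr = Fq r q b - Fq r q a.
Proof.
  intros Hab. apply FTC_expl; auto.
  - intros; unfold Kf; reg.
  - intros; apply Fq_deriv.
Qed.

Lemma G_nonneg r a b : a <= b ->
  0 <= Fq r (r * (cos a + cos b) / 2) b - Fq r (r * (cos a + cos b) / 2) a.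
Proof.
  intros Hab.
  set (g := fun y => Fq r (r * (cos a + cos y) / 2) y - Fq r (r * (cos a + cos y) / 2) a).
  set (g' := fun y => r * r * (1 - cos (y - a)) / 2).
  assert (Hd : forall x, derivable_pt_lim g x (g' x)).
  { intros x. unfold g, g', Fq.
    eapply dl_minus.
    - eapply dl_minus.
      + eapply dl_scal. eapply dl_plus.
        * eapply dl_mult. apply dl_id. apply dl_const. reflexivity.
        * eapply dl_mult. eapply dl_sin. eapply dl_mult. apply dl_const. apply dl_id.
          reflexivity. reflexivity. apply dl_const. reflexivity.
        * reflexivity.
        * reflexivity.
      + eapply dl_mult. eapply dl_mult.
        * unfold Rdiv. eapply dl_mult. eapply dl_scal. eapply dl_plus. apply dl_const.
          eapply dl_cos. apply dl_id. reflexivity. reflexivity. reflexivity.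
          apply dl_const. reflexivity.
        * apply dl_const.
        * reflexivity.
        * eapply dl_sin. apply dl_id. reflexivity.
        * reflexivity.
      + reflexivity.
    - eapply dl_minus.
      + apply dl_const.
      + eapply dl_mult. eapply dl_mult.
        * unfold Rdiv. eapply dl_mult. eapply dl_scal. eapply dl_plus. apply dl_const.
          eapply dl_cos. apply dl_id. reflexivity. reflexivity. reflexivity.
          apply dl_const. reflexivity.
        * apply dl_const.
        * reflexivity.
        * apply dl_const.
        * reflexivity.
      + reflexivity.
    - rewrite cos_minus, cos_2a_cos. pose proof (sin2_cos2 x). unfold Rsqr in *. nra. }
  assert (Hp : forall x, 0 <= g' x).
  { intros x; unfold g'. pose proof (COS_bound (x - a)). nra. }
  pose proof (incr_from_deriv g g' Hd Hp a b Hab). unfold g in H.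
  replace (Fq r (r * (cos a + cos a) / 2) a - Fq r (r * (cos a + cos a) / 2) a) with 0 in H by ring.
  lra.
Qed.

Lemma Rfloor_eq z x : IZR z <= x < IZR z + 1 -> Rfloor x = IZR z.
Proof.
  intros [H1 H2]. unfold Rfloor.
  rewrite <- (tech_up x (z + 1)).
  - rewrite Z.add_simpl_r; reflexivity.
  - rewrite plus_IZR; simpl; lra.
  - rewrite plus_IZR; simpl; lra.
Qed.

Lemma Qd_on delta z t : 0 < delta ->
  (IZR z - / 2) * delta <= t < (IZR z + / 2) * delta -> Qd delta t = delta * IZR z.
Proof.
  intros Hd [H1 H2]. unfold Qd. rewrite (Rfloor_eq z); [reflexivity|].
  split.
  - apply Rmult_le_reg_r with delta; [lra|].
    replace ((t / delta + / 2) * delta) with (t + delta / 2) by (field; lra). nra.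
  - apply Rmult_lt_reg_r with delta; [lra|].
    replace ((t / delta + / 2) * delta) with (t + delta / 2) by (field; lra). nra.
Qed.

Lemma Qd_bounds delta t : 0 < delta -> t - delta / 2 < Qd delta t <= t + delta / 2.
Proof.
  intros Hd. unfold Qd, Rfloor.
  destruct (archimed (t / delta + / 2)) as [H1 H2].
  rewrite minus_IZR. simpl.
  set (u := IZR (up (t / delta + / 2))) in *.
  assert (t = (t / delta) * delta) by (field; lra).
  split; nra.
Qed.

Lemma r_pos delta M r : 0 < delta -> (1 <= M)%nat -> r = (INR M - / 2) * delta -> delta / 2 <= r.
Proof.
  intros Hd HM Hr. apply le_INR in HM. simpl in HM. subst. nra.
Qed.

Lemma acos_facts x : -1 <= x <= 1 -> 0 <= acos x <= PI /\ cos (acos x) = x.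
Proof. intros; split; [apply acos_bound | apply cos_acos; auto]. Qed.

Lemma Q_top delta M r phi : 0 < delta -> (1 <= M)%nat -> r = (INR M - / 2) * delta ->
  0 < Rabs phi < acos ((r - delta) / r) ->
  Qd delta (r * cos phi) = r - delta / 2.
Proof.
  intros Hd HM Hr Hphi.
  pose proof (r_pos _ _ _ Hd HM Hr) as Hrp.
  assert (Hb : -1 <= (r - delta) / r <= 1).
  { split; [apply Rmult_le_reg_r with r; [lra|]; unfold Rdiv; rewrite Rmult_assoc, Rinv_l; lra
           |apply Rmult_le_reg_r with r; [lra|]; unfold Rdiv; rewrite Rmult_assoc, Rinv_l; lra]. }
  destruct (acos_facts _ Hb) as [Hab Hcos].
  set (p1 := acos ((r - delta) / r)) in *.
  assert (Hc : cos phi = cos (Rabs phi)).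
  { unfold Rabs; destruct (Rcase_abs phi); [rewrite cos_neg|]; reflexivity. }
  assert (H1 : cos (Rabs phi) < 1).
  { rewrite <- cos_0. apply cos_decreasing_1; lra. }
  assert (H2 : (r - delta) / r < cos (Rabs phi)).
  { rewrite <- Hcos. apply cos_decreasing_1; lra. }
  rewrite Hc.
  assert (H3 : r - delta < r * cos (Rabs phi)).
  { apply Rmult_lt_reg_r with (/ r). apply Rinv_0_lt_compat; lra.
    replace (r * cos (Rabs phi) * / r) with (cos (Rabs phi)) by (field; lra).
    exact H2. }
  assert (H4 : r * cos (Rabs phi) < r) by nra.
  rewrite (Qd_on delta (Z.of_nat M - 1)); auto.
  - rewrite minus_IZR, <- INR_IZR_INZ. simpl. clear -Hr. subst r. field.
  - rewrite minus_IZR, <- INR_IZR_INZ. simpl. rewrite Hr in H3, H4 |- *. split; nra.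
Qed.

Lemma div_bound a r : 0 < r -> -r <= a <= r -> -1 <= a / r <= 1.
Proof.
  intros Hr Ha. split.
  - apply Rmult_le_reg_r with r; [lra|]. unfold Rdiv; rewrite Rmult_assoc, Rinv_l; lra.
  - apply Rmult_le_reg_r with r; [lra|]. unfold Rdiv; rewrite Rmult_assoc, Rinv_l; lra.
Qed.

Lemma cos_gt_acos p x : -1 <= x <= 1 -> Rabs p < acos x -> x < cos p.
Proof.
  intros Hx Hp. destruct (acos_facts _ Hx) as [Hb Hc].
  assert (Hc' : cos p = cos (Rabs p)).
  { unfold Rabs; destruct (Rcase_abs p); [rewrite cos_neg|]; reflexivity. }
  rewrite Hc', <- Hc. apply cos_decreasing_1; try lra. apply Rabs_pos.
Qed.

Lemma Q_bot delta M r phi : 0 < delta -> (2 <= M)%nat -> r = (INR M - / 2) * delta ->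
  Rabs (phi - PI) < acos ((r - delta) / r) ->
  Qd delta (r * cos phi) = - (r - delta / 2).
Proof.
  intros Hd HM Hr Hphi.
  assert (HM' : (1 <= M)%nat) by lia.
  pose proof (r_pos _ _ _ Hd HM' Hr) as Hrp.
  assert (Hb : -1 <= (r - delta) / r <= 1) by (apply div_bound; lra).
  pose proof (cos_gt_acos _ _ Hb Hphi) as H2.
  assert (Hc : cos phi = - cos (phi - PI)).
  { rewrite cos_minus, cos_PI, sin_PI. ring. }
  rewrite Hc.
  assert (H3 : r - delta < r * cos (phi - PI)).
  { apply Rmult_lt_reg_r with (/ r). apply Rinv_0_lt_compat; lra.
    replace (r * cos (phi - PI) * / r) with (cos (phi - PI)) by (field; lra).
    exact H2. }
  assert (H4 : r * cos (phi - PI) <= r).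
  { pose proof (COS_bound (phi - PI)). nra. }
  rewrite (Qd_on delta (1 - Z.of_nat M)); auto.
  - rewrite minus_IZR, <- INR_IZR_INZ. simpl. clear -Hr. subst r. field.
  - rewrite minus_IZR, <- INR_IZR_INZ. simpl. rewrite Hr in H3, H4 |- *. split; nra.
Qed.

Definition Lm delta r (m : nat) : R := r - delta - INR m * delta.
Definition bm delta r (m : nat) : R := acos (Lm delta r m / r).

Lemma Lm_bound delta M r m : 0 < delta -> (2 <= M)%nat -> r = (INR M - / 2) * delta ->
  (m + 3 <= 2 * M)%nat -> -1 <= Lm delta r m / r <= 1.
Proof.
  intros Hd HM Hr Hm. assert (HM' : (1 <= M)%nat) by lia.
  pose proof (r_pos _ _ _ Hd HM' Hr) as Hrp. apply div_bound; [lra|].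
  unfold Lm. apply le_INR in Hm. rewrite plus_INR, mult_INR in Hm. simpl in Hm.
  pose proof (pos_INR m). subst r. split; nra.
Qed.

Lemma bm_mono delta M r m : 0 < delta -> (2 <= M)%nat -> r = (INR M - / 2) * delta ->
  (m + 4 <= 2 * M)%nat -> bm delta r m < bm delta r (S m).
Proof.
  intros Hd HM Hr Hm. assert (HM' : (1 <= M)%nat) by lia.
  pose proof (r_pos _ _ _ Hd HM' Hr) as Hrp.
  destruct (acos_facts _ (Lm_bound delta M r m Hd HM Hr ltac:(lia))) as [B1 C1].
  destruct (acos_facts _ (Lm_bound delta M r (S m) Hd HM Hr ltac:(lia))) as [B2 C2].
  unfold bm in *. apply cos_decreasing_0; try lra.
  rewrite C1, C2. unfold Lm. rewrite S_INR. unfold Rdiv.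
  apply Rmult_lt_compat_r; [apply Rinv_0_lt_compat; lra | lra].
Qed.

Lemma Q_mid delta M r m phi : 0 < delta -> (2 <= M)%nat -> r = (INR M - / 2) * delta ->
  (m + 4 <= 2 * M)%nat -> bm delta r m < Rabs phi < bm delta r (S m) ->
  Qd delta (r * cos phi) = r * (cos (bm delta r m) + cos (bm delta r (S m))) / 2.
Proof.
  intros Hd HM Hr Hm Hphi. assert (HM' : (1 <= M)%nat) by lia.
  pose proof (r_pos _ _ _ Hd HM' Hr) as Hrp.
  destruct (acos_facts _ (Lm_bound delta M r m Hd HM Hr ltac:(lia))) as [B1 C1].
  destruct (acos_facts _ (Lm_bound delta M r (S m) Hd HM Hr ltac:(lia))) as [B2 C2].
  unfold bm in *. rewrite C1, C2.
  assert (Hc' : cos phi = cos (Rabs phi)).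
  { unfold Rabs; destruct (Rcase_abs phi); [rewrite cos_neg|]; reflexivity. }
  assert (Ha : 0 <= Rabs phi) by apply Rabs_pos.
  assert (K1 : cos (Rabs phi) < Lm delta r m / r).
  { rewrite <- C1. apply cos_decreasing_1; lra. }
  assert (K2 : Lm delta r (S m) / r < cos (Rabs phi)).
  { rewrite <- C2. apply cos_decreasing_1; lra. }
  rewrite Hc'.
  assert (H3 : Lm delta r (S m) < r * cos (Rabs phi)).
  { apply Rmult_lt_reg_r with (/ r). apply Rinv_0_lt_compat; lra.
    replace (r * cos (Rabs phi) * / r) with (cos (Rabs phi)) by (field; lra). exact K2. }
  assert (H4 : r * cos (Rabs phi) < Lm delta r m).
  { apply Rmult_lt_reg_r with (/ r). apply Rinv_0_lt_compat; lra.
    replace (r * cos (Rabs phi) * / r) with (cos (Rabs phi)) by (field; lra). exact K1. }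
  unfold Lm in *. rewrite S_INR in H3.
  assert (Hz : IZR (Z.of_nat M - 2 - Z.of_nat m) = INR M - 2 - INR m).
  { rewrite !minus_IZR, <- !INR_IZR_INZ. reflexivity. }
  rewrite (Qd_on delta (Z.of_nat M - 2 - Z.of_nat m)); auto.
  - rewrite Hz. clear -Hr Hrp Hd. subst r. rewrite S_INR. assert (Hnz : (INR M - / 2) * delta <> 0) by (intro; lra). field. split; intro; nra.
  - rewrite Hz. rewrite Hr in H3, H4 |- *. split; nra.
Qed.

Definition Hk delta r (K : R -> R -> R) (phi : R) : R := K phi (Qd delta (r * cos phi)).

Lemma piece_int delta r K a b q : a <= b ->
  (forall phi, a < phi < b -> Qd delta (r * cos phi) = q) ->
  (forall x, continuity_pt (fun phi => K phi q) x) ->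
  Riemann_integrable (Hk delta r K) a b.
Proof.
  intros Hab HQ Hc.
  apply RI_open_ext with (g := fun phi => K phi q); auto.
  - intros x Hx; unfold Hk; rewrite HQ; auto.
  - apply continuity_implies_RiemannInt; auto.
Qed.

Definition HK r : R -> R -> R := fun phi q => Kf r q phi.

Lemma piece_H delta r a b q V : a <= b ->
  (forall phi, a < phi < b -> Qd delta (r * cos phi) = q) ->
  Fq r q b - Fq r q a >= V ->
  exists pr : Riemann_integrable (Hk delta r (HK r)) a b, RiemannInt pr >= V.
Proof.
  intros Hab HQ HV.
  destruct (Kf_RI r q a b Hab) as [p1 H1].
  assert (p2 : Riemann_integrable (Hk delta r (HK r)) a b).
  { apply RI_open_ext with (g := Kf r q); auto.
    intros x Hx; unfold Hk, HK; rewrite HQ; auto. }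
  exists p2. rewrite (RI_open_ext_val _ _ _ _ p2 p1 Hab).
  - lra.
  - intros x Hx; unfold Hk, HK; rewrite HQ; auto.
Qed.

Lemma Fq_top r delta q p : 0 < r -> cos p = (r - delta) / r -> q = r - delta / 2 ->
  Fq r q p - Fq r q 0 = r * r * (p - sin p) / 2 /\
  Fq r q 0 - Fq r q (- p) = r * r * (p - sin p) / 2.
Proof.
  intros Hr Hc Hq. unfold Fq. rewrite Rmult_0_r, !sin_0, !sin_2a, sin_neg, cos_neg, Hc, Hq.
  split; field; lra.
Qed.

Lemma Fq_bot r delta q p : 0 < r -> cos p = (r - delta) / r -> q = - (r - delta / 2) ->
  Fq r q (PI + p) - Fq r q (PI - p) = r * r * (p - sin p).
Proof.
  intros Hr Hc Hq. unfold Fq. rewrite !sin_2a.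
  rewrite (Rplus_comm PI p), neg_sin, neg_cos, sin_PI_x.
  rewrite (cos_minus PI p), sin_PI, cos_PI, Hc, Hq.
  field; lra.
Qed.

Lemma RI_chainT (f : R -> R) (b : nat -> R) (n : nat) :
  (forall m, (m < n)%nat -> Riemann_integrable f (b m) (b (S m))) ->
  Riemann_integrable f (b 0%nat) (b n).
Proof.
  induction n as [|n IH]; intros H.
  - apply RiemannInt_P7.
  - apply RiemannInt_P24 with (b n). apply IH; intros; apply H; lia. apply H; lia.
Qed.

Lemma RI_bounds (f : R -> R) a b a' b' v : a = a' -> b = b' ->
  (exists pr : Riemann_integrable f a b, RiemannInt pr >= v) ->
  exists pr : Riemann_integrable f a' b', RiemannInt pr >= v.
Proof. intros; subst; auto. Qed.

Lemma bm0 delta r : bm delta r 0 = acos ((r - delta) / r).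
Proof. unfold bm, Lm. simpl. f_equal. f_equal. ring. Qed.

Lemma bm_last delta M r : 0 < delta -> (2 <= M)%nat -> r = (INR M - / 2) * delta ->
  bm delta r (2 * M - 3) = PI - acos ((r - delta) / r).
Proof.
  intros Hd HM Hr. unfold bm, Lm. rewrite <- acos_opp. f_equal.
  rewrite minus_INR by lia. rewrite mult_INR. simpl.
  assert (HM' : (1 <= M)%nat) by lia.
  pose proof (r_pos _ _ _ Hd HM' Hr). field_simplify; [|lra|lra].
  subst r. field. split; [lra|]. intro. apply le_INR in HM. simpl in HM. lra.
Qed.

Lemma bm_nonneg delta r m : 0 <= bm delta r m.
Proof. unfold bm. apply acos_bound. Qed.

Lemma window_H delta M r : 0 < delta -> (2 <= M)%nat -> r = (INR M - / 2) * delta ->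
  let p1 := acos ((r - delta) / r) in
  exists pr : Riemann_integrable (Hk delta r (HK r)) (- PI + p1) (PI + p1),
    RiemannInt pr >= 2 * (r * r * (p1 - sin p1)).
Proof.
  intros Hd HM Hr p1.
  assert (HM' : (1 <= M)%nat) by lia.
  pose proof (r_pos _ _ _ Hd HM' Hr) as Hrp.
  assert (Hb : -1 <= (r - delta) / r <= 1) by (apply div_bound; lra).
  destruct (acos_facts _ Hb) as [Hpb Hpc]. fold p1 in Hpb, Hpc.
  assert (E0 : bm delta r 0 = p1) by apply bm0.
  assert (EL : bm delta r (2 * M - 3) = PI - p1) by (apply bm_last; auto).
  set (f := Hk delta r (HK r)).
  set (v := r * r * (p1 - sin p1)).
  assert (R1 : exists pr : Riemann_integrable f (- PI + p1) (- p1), RiemannInt pr >= 0).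
  { pose (b := fun m => - bm delta r (2 * M - 3 - m)).
    destruct (RI_chain0 f b (2 * M - 3)) as [pr Hpr].
    - intros m Hm. unfold b.
      set (m' := (2 * M - 4 - m)%nat).
      replace (2 * M - 3 - m)%nat with (S m') by (unfold m'; lia).
      replace (2 * M - 3 - S m)%nat with m' by (unfold m'; lia).
      assert (Hlt := bm_mono delta M r m' Hd HM Hr ltac:(unfold m'; lia)).
      assert (Hm4 : (m' + 4 <= 2 * M)%nat) by (unfold m'; lia). clearbody m'.
      apply piece_H with (q := r * (cos (- bm delta r (S m')) + cos (- bm delta r m')) / 2).
      + lra.
      + intros phi Hphi. rewrite !cos_neg.
        assert (Hn := bm_nonneg delta r m').
        rewrite (Q_mid delta M r m' phi Hd HM Hr ltac:(lia)).
        * rewrite (Rplus_comm (cos (bm delta r m'))). reflexivity.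
        * rewrite Rabs_left by lra. fold p1. lra.
      + pose proof (G_nonneg r _ _ (Rlt_le _ _ Hlt)) as HG.
        assert (HG' := G_nonneg r (- bm delta r (S m')) (- bm delta r m') ltac:(lra)). lra.
    - apply RI_bounds with (b 0%nat) (b (2 * M - 3)%nat).
      + unfold b. rewrite Nat.sub_0_r, EL. ring.
      + unfold b. rewrite Nat.sub_diag, E0. ring.
      + exists pr. exact Hpr. }
  assert (R2 : exists pr : Riemann_integrable f (- p1) 0, RiemannInt pr >= v / 2).
  { apply piece_H with (q := r - delta / 2).
    - lra.
    - intros phi Hphi. apply (Q_top delta M); auto. rewrite Rabs_left by lra. fold p1. lra.
    - destruct (Fq_top r delta (r - delta / 2) p1 ltac:(lra) Hpc eq_refl) as [_ H2].
      unfold v. lra. }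
  assert (R3 : exists pr : Riemann_integrable f 0 p1, RiemannInt pr >= v / 2).
  { apply piece_H with (q := r - delta / 2).
    - lra.
    - intros phi Hphi. apply (Q_top delta M); auto. rewrite Rabs_right by lra. fold p1. lra.
    - destruct (Fq_top r delta (r - delta / 2) p1 ltac:(lra) Hpc eq_refl) as [H1 _].
      unfold v. lra. }
  assert (R4 : exists pr : Riemann_integrable f p1 (PI - p1), RiemannInt pr >= 0).
  { destruct (RI_chain0 f (bm delta r) (2 * M - 3)) as [pr Hpr].
    - intros m Hm.
      assert (Hlt := bm_mono delta M r m Hd HM Hr ltac:(lia)).
      apply piece_H with (q := r * (cos (bm delta r m) + cos (bm delta r (S m))) / 2).
      + lra.
      + intros phi Hphi.
        assert (Hn := bm_nonneg delta r m).
        apply (Q_mid delta M r m phi Hd HM Hr ltac:(lia)).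
        rewrite Rabs_right by lra. fold p1. lra.
      + pose proof (G_nonneg r _ _ (Rlt_le _ _ Hlt)) as HG. lra.
    - apply RI_bounds with (bm delta r 0) (bm delta r (2 * M - 3)); auto.
      exists pr. exact Hpr. }
  assert (R5 : exists pr : Riemann_integrable f (PI - p1) (PI + p1), RiemannInt pr >= v).
  { apply piece_H with (q := - (r - delta / 2)).
    - lra.
    - intros phi Hphi. apply (Q_bot delta M); auto.
      unfold Rabs; destruct (Rcase_abs (phi - PI)); fold p1; lra.
    - rewrite (Fq_bot r delta (- (r - delta / 2)) p1 ltac:(lra) Hpc eq_refl).
      unfold v. lra. }
  destruct (RI_join f _ _ _ _ _ R1 R2) as [q1 Hq1].
  destruct (RI_join f _ _ _ _ _ (ex_intro _ q1 Hq1) R3) as [q2 Hq2].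
  destruct (RI_join f _ _ _ _ _ (ex_intro _ q2 Hq2) R4) as [q3 Hq3].
  destruct (RI_join f _ _ _ _ _ (ex_intro _ q3 Hq3) R5) as [q4 Hq4].
  exists q4. lra.
Qed.

Lemma window_H1 delta M r : 0 < delta -> (1 <= M)%nat -> r = (INR M - / 2) * delta ->
  let p1 := acos ((r - delta) / r) in
  exists pr : Riemann_integrable (Hk delta r (HK r)) (- p1) p1,
    RiemannInt pr >= r * r * (p1 - sin p1).
Proof.
  intros Hd HM Hr p1.
  pose proof (r_pos _ _ _ Hd HM Hr) as Hrp.
  assert (Hb : -1 <= (r - delta) / r <= 1) by (apply div_bound; lra).
  destruct (acos_facts _ Hb) as [Hpb Hpc]. fold p1 in Hpb, Hpc.
  set (f := Hk delta r (HK r)).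
  set (v := r * r * (p1 - sin p1)).
  assert (R2 : exists pr : Riemann_integrable f (- p1) 0, RiemannInt pr >= v / 2).
  { apply piece_H with (q := r - delta / 2).
    - lra.
    - intros phi Hphi. apply (Q_top delta M); auto. rewrite Rabs_left by lra. fold p1. lra.
    - destruct (Fq_top r delta (r - delta / 2) p1 ltac:(lra) Hpc eq_refl) as [_ H2].
      unfold v. lra. }
  assert (R3 : exists pr : Riemann_integrable f 0 p1, RiemannInt pr >= v / 2).
  { apply piece_H with (q := r - delta / 2).
    - lra.
    - intros phi Hphi. apply (Q_top delta M); auto. rewrite Rabs_right by lra. fold p1. lra.
    - destruct (Fq_top r delta (r - delta / 2) p1 ltac:(lra) Hpc eq_refl) as [H1 _].
      unfold v. lra. }
  destruct (RI_join f _ _ _ _ _ R2 R3) as [q Hq]. exists q. lra.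
Qed.

Definition GK : R -> R -> R := fun _ q => q.

Lemma piece_G delta r a b q : a <= b ->
  (forall phi, a < phi < b -> Qd delta (r * cos phi) = q) ->
  Riemann_integrable (Hk delta r GK) a b.
Proof. intros; apply piece_int with q; auto. intros; unfold GK; reg. Qed.

Lemma window_G delta M r : 0 < delta -> (2 <= M)%nat -> r = (INR M - / 2) * delta ->
  let p1 := acos ((r - delta) / r) in
  Riemann_integrable (Hk delta r GK) (- PI + p1) (PI + p1).
Proof.
  intros Hd HM Hr p1.
  assert (HM' : (1 <= M)%nat) by lia.
  pose proof (r_pos _ _ _ Hd HM' Hr) as Hrp.
  assert (Hb : -1 <= (r - delta) / r <= 1) by (apply div_bound; lra).
  destruct (acos_facts _ Hb) as [Hpb Hpc]. fold p1 in Hpb, Hpc.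
  assert (E0 : bm delta r 0 = p1) by apply bm0.
  assert (EL : bm delta r (2 * M - 3) = PI - p1) by (apply bm_last; auto).
  set (f := Hk delta r GK).
  assert (R1 : Riemann_integrable f (- PI + p1) (- p1)).
  { pose (b := fun m => - bm delta r (2 * M - 3 - m)).
    assert (X : Riemann_integrable f (b 0%nat) (b (2 * M - 3)%nat)).
    { apply RI_chainT. intros m Hm. unfold b.
      set (m' := (2 * M - 4 - m)%nat).
      replace (2 * M - 3 - m)%nat with (S m') by (unfold m'; lia).
      replace (2 * M - 3 - S m)%nat with m' by (unfold m'; lia).
      assert (Hlt := bm_mono delta M r m' Hd HM Hr ltac:(unfold m'; lia)).
      assert (Hm4 : (m' + 4 <= 2 * M)%nat) by (unfold m'; lia). clearbody m'.
      apply piece_G with (q := r * (cos (bm delta r m') + cos (bm delta r (S m'))) / 2).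
      + lra.
      + intros phi Hphi.
        assert (Hn := bm_nonneg delta r m').
        apply (Q_mid delta M r m' phi Hd HM Hr ltac:(lia)).
        rewrite Rabs_left by lra. lra. }
    replace (b 0%nat) with (- PI + p1) in X by (unfold b; rewrite Nat.sub_0_r, EL; ring).
    replace (b (2 * M - 3)%nat) with (- p1) in X by (unfold b; rewrite Nat.sub_diag, E0; ring).
    exact X. }
  assert (R2 : Riemann_integrable f (- p1) 0).
  { apply piece_G with (q := r - delta / 2).
    - lra.
    - intros phi Hphi. apply (Q_top delta M); auto. rewrite Rabs_left by lra. fold p1. lra. }
  assert (R3 : Riemann_integrable f 0 p1).
  { apply piece_G with (q := r - delta / 2).
    - lra.
    - intros phi Hphi. apply (Q_top delta M); auto. rewrite Rabs_right by lra. fold p1. lra. }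
  assert (R4 : Riemann_integrable f p1 (PI - p1)).
  { assert (X : Riemann_integrable f (bm delta r 0) (bm delta r (2 * M - 3))).
    { apply RI_chainT. intros m Hm.
      assert (Hlt := bm_mono delta M r m Hd HM Hr ltac:(lia)).
      apply piece_G with (q := r * (cos (bm delta r m) + cos (bm delta r (S m))) / 2).
      + lra.
      + intros phi Hphi.
        assert (Hn := bm_nonneg delta r m).
        apply (Q_mid delta M r m phi Hd HM Hr ltac:(lia)).
        rewrite Rabs_right by lra. lra. }
    rewrite E0, EL in X. exact X. }
  assert (R5 : Riemann_integrable f (PI - p1) (PI + p1)).
  { apply piece_G with (q := - (r - delta / 2)).
    - lra.
    - intros phi Hphi. apply (Q_bot delta M); auto.
      unfold Rabs; destruct (Rcase_abs (phi - PI)); fold p1; lra. }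
  apply RiemannInt_P24 with (PI - p1); [|exact R5].
  apply RiemannInt_P24 with p1; [|exact R4].
  apply RiemannInt_P24 with 0; [|exact R3].
  apply RiemannInt_P24 with (- p1); [exact R1|exact R2].
Qed.

Lemma window_G1 delta M r : 0 < delta -> (1 <= M)%nat -> r = (INR M - / 2) * delta ->
  let p1 := acos ((r - delta) / r) in
  Riemann_integrable (Hk delta r GK) (- p1) p1.
Proof.
  intros Hd HM Hr p1.
  pose proof (r_pos _ _ _ Hd HM Hr) as Hrp.
  assert (Hb : -1 <= (r - delta) / r <= 1) by (apply div_bound; lra).
  destruct (acos_facts _ Hb) as [Hpb Hpc]. fold p1 in Hpb, Hpc.
  apply RiemannInt_P24 with 0.
  - apply piece_G with (q := r - delta / 2).
    + lra.
    + intros phi Hphi. apply (Q_top delta M); auto. rewrite Rabs_left by lra. fold p1. lra.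
  - apply piece_G with (q := r - delta / 2).
    + lra.
    + intros phi Hphi. apply (Q_top delta M); auto. rewrite Rabs_right by lra. fold p1. lra.
Qed.

Lemma INR_fact_S n : INR (fact (S n)) = INR (S n) * INR (fact n).
Proof. rewrite fact_simpl, mult_INR. reflexivity. Qed.

Lemma sin_ub_eq x : sin_ub x = x - x^3/6 + x^5/120 - x^7/5040 + x^9/362880.
Proof. unfold sin_ub, sin_approx, sin_term. cbn -[fact INR pow]. rewrite !INR_fact_S. simpl INR. field. Qed.
Lemma cos_lb_eq x : cos_lb x = 1 - x^2/2 + x^4/24 - x^6/720.
Proof. unfold cos_lb, cos_approx, cos_term. cbn -[fact INR pow]. rewrite !INR_fact_S. simpl INR. field. Qed.

Lemma PI_RGT_3 : 3 < PI.
Proof.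
  destruct (Rlt_le_dec 3 PI) as [h|h]; [exact h|exfalso].
  pose proof PI_RGT_0.
  assert (Ha : - PI / 2 <= PI / 2) by lra.
  destruct (COS (PI / 2) Ha (Rle_refl _)) as [Hc _].
  rewrite cos_PI2, cos_lb_eq in Hc.
  set (a := PI / 2) in *.
  assert (0 < a <= 3/2) by (unfold a; lra).
  set (t := a * a).
  assert (0 < t <= 9/4) by (unfold t; nra).
  assert (Ht : a^2 = t /\ a^4 = t*t /\ a^6 = t*t*t) by (unfold t; repeat split; ring).
  destruct Ht as [E1 [E2 E3]]. rewrite E1, E2, E3 in Hc.
  nra.
Qed.

Lemma x_minus_sin x : 0 <= x -> x * x <= 2 -> x - sin x >= x^3/6 * (1 - x^2/20).
Proof.
  intros H0 H2. pose proof PI_RGT_3 as Hpi.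
  assert (H : x <= PI) by nra.
  destruct (SIN x H0 H) as [_ Hs]. rewrite sin_ub_eq in Hs.
  assert (x^7/5040 - x^9/362880 >= 0).
  { assert (x^9 = x^7 * (x*x)) by ring.
    assert (0 <= x^7) by (apply pow_le; lra). nra. }
  nra.
Qed.

Lemma cos_ge_quad x : 0 <= x -> x * x <= 2 -> 1 - x^2/2 <= cos x.
Proof.
  intros H0 H2. pose proof PI_RGT_3 as Hpi.
  assert (H : x <= PI/2) by nra.
  destruct (COS x ltac:(lra) H) as [Hc _]. rewrite cos_lb_eq in Hc.
  assert (x^4/24 - x^6/720 >= 0).
  { assert (x^6 = x^4 * (x*x)) by ring.
    assert (0 <= x^4) by (apply pow_le; lra). nra. }
  nra.
Qed.

Lemma id_minus_sin_mono x y : x <= y -> x - sin x <= y - sin y.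
Proof.
  apply (incr_from_deriv (fun z => z - sin z) (fun z => 1 - cos z)).
  - intros z. eapply dl_minus. apply dl_id. eapply dl_sin. apply dl_id. reflexivity. ring.
  - intros z. pose proof (COS_bound z). lra.
Qed.

Lemma p1_bound u : 0 < u -> u <= 2/3 ->
  let x := sqrt (2 * u) in
  acos (1 - u) - sin (acos (1 - u)) >= x^3/6 * (1 - x^2/20).
Proof.
  intros Hu Hu2 x.
  assert (Hx2 : x * x = 2 * u) by (apply sqrt_sqrt; lra).
  assert (Hx0 : 0 <= x) by apply sqrt_pos.
  assert (Hb : -1 <= 1 - u <= 1) by lra.
  destruct (acos_facts _ Hb) as [Hpb Hpc].
  assert (Hxp : x <= acos (1 - u)).
  { destruct (Rle_dec x (acos (1 - u))) as [h|h]; [exact h|].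
    exfalso. assert (acos (1 - u) < x) by lra.
    pose proof PI_RGT_3.
    assert (x <= PI) by nra.
    assert (cos x < cos (acos (1 - u))) by (apply cos_decreasing_1; lra).
    pose proof (cos_ge_quad x Hx0 ltac:(lra)).
    assert (x^2 = x * x) by ring. lra. }
  pose proof (id_minus_sin_mono _ _ Hxp).
  pose proof (x_minus_sin x Hx0 ltac:(lra)). lra.
Qed.

Definition Kt delta r := 16 * sqrt 2 / (3 * PI ^ 2) * (delta * sqrt delta) * sqrt r.

Lemma Ilb_M2 delta M r : 0 < delta -> (2 <= M)%nat -> r = (INR M - / 2) * delta ->
  let p1 := acos ((r - delta) / r) in
  2 * (r * r * (p1 - sin p1)) >= Kt delta r.
Proof.
  intros Hd HM Hr p1.
  assert (HM2 : 2 <= INR M) by (apply le_INR in HM; simpl in HM; lra).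
  assert (Hr32 : 3/2 * delta <= r) by (subst; nra).
  assert (Hr0 : 0 < r) by lra.
  set (u := delta / r).
  assert (Hu0 : 0 < u) by (unfold u; apply Rdiv_lt_0_compat; lra).
  assert (Hu1 : u <= 2/3).
  { unfold u. apply Rmult_le_reg_r with r; [lra|]. unfold Rdiv. rewrite Rmult_assoc, Rinv_l; lra. }
  assert (Ep : (r - delta) / r = 1 - u) by (unfold u; field; lra).
  unfold p1. rewrite Ep.
  pose proof (p1_bound u Hu0 Hu1) as Hb. simpl in Hb.
  set (x := sqrt (2 * u)) in *.
  set (s := sqrt delta). set (rho := sqrt r). set (w := sqrt 2).
  assert (Hs : s * s = delta) by (apply sqrt_sqrt; lra).
  assert (Hrho : rho * rho = r) by (apply sqrt_sqrt; lra).
  assert (Hw : w * w = 2) by (apply sqrt_sqrt; lra).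
  assert (Hs0 : 0 < s) by (apply sqrt_lt_R0; lra).
  assert (Hrho0 : 0 < rho) by (apply sqrt_lt_R0; lra).
  assert (Hw0 : 0 < w) by (apply sqrt_lt_R0; lra).
  assert (Hx : x = w * s / rho).
  { unfold x, u, w, s, rho. rewrite sqrt_mult by (try apply Rlt_le, Rdiv_lt_0_compat; lra).
    rewrite sqrt_div by lra. field. apply Rgt_not_eq, sqrt_lt_R0; lra. }
  assert (Hx2 : x * x = 2 * u) by (unfold x; apply sqrt_sqrt; lra).
  assert (Key : r * r * x ^ 3 = 2 * w * (s * s * s) * rho).
  { rewrite Hx. rewrite <- Hrho.
    replace ((w * s / rho) ^ 3) with ((w * w) * w * (s * s * s) / (rho * rho * rho)) by (field; lra).
    rewrite Hw. field. lra. }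
  unfold Kt. fold w s rho.
  pose proof PI_RGT_3 as Hpi.
  assert (Hpi2 : 9 < PI ^ 2) by nra.
  assert (Hc : 16 / (3 * PI ^ 2) <= 16 / 27).
  { apply Rmult_le_compat_l; [lra|]. apply Rinv_le_contravar; lra. }
  assert (Hfac : 1 - x ^ 2 / 20 >= 14 / 15) by (replace (x^2) with (x*x) by ring; lra).
  assert (Hpos : 0 < w * (s * s * s) * rho) by (apply Rmult_lt_0_compat; [|lra]; apply Rmult_lt_0_compat; [lra|]; nra).
  assert (Hx3 : 0 <= x ^ 3) by (apply pow_le; unfold x; apply sqrt_pos).
  assert (H1 : 2 * (r * r * (acos (1 - u) - sin (acos (1 - u)))) >=
               2 * (r * r) * (x ^ 3 / 6 * (1 - x ^ 2 / 20))).
  { assert (0 <= r * r) by nra. nra. }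
  assert (H2 : 2 * (r * r) * (x ^ 3 / 6 * (1 - x ^ 2 / 20)) >= 2 * (r * r * x^3) / 6 * (14/15)).
  { assert (0 <= r * r * x^3) by (apply Rmult_le_pos; nra). nra. }
  rewrite Key in H2.
  replace (16 * w / (3 * PI ^ 2) * (delta * s) * rho) with
    (16 / (3 * PI ^ 2) * (w * (s * s * s) * rho)) by (rewrite <- Hs; field; lra).
  nra.
Qed.

Lemma Ilb_M1 delta M r : 0 < delta -> M = 1%nat -> r = (INR M - / 2) * delta ->
  let p1 := acos ((r - delta) / r) in
  r * r * (p1 - sin p1) >= Kt delta r.
Proof.
  intros Hd HM Hr p1. subst M. simpl in Hr.
  assert (Er : r = delta / 2) by (rewrite Hr; field).
  assert (Ep : (r - delta) / r = Ropp 1) by (rewrite Er; field; lra).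
  unfold p1. rewrite Ep, acos_opp, acos_1, Rminus_0_r, sin_PI, Rminus_0_r.
  unfold Kt.
  assert (Hrr : sqrt r = sqrt delta / sqrt 2).
  { rewrite Er. apply sqrt_div; lra. }
  rewrite Hrr.
  assert (Hs : sqrt delta * sqrt delta = delta) by (apply sqrt_sqrt; lra).
  assert (Hw0 : 0 < sqrt 2) by (apply sqrt_lt_R0; lra).
  pose proof PI_RGT_3 as Hpi.
  replace (16 * sqrt 2 / (3 * PI ^ 2) * (delta * sqrt delta) * (sqrt delta / sqrt 2))
    with (16 * (delta * delta) / (3 * PI ^ 2)) by (rewrite <- Hs at 2; field; split; lra).
  rewrite Er.
  apply Rle_ge. apply Rmult_le_reg_r with (3 * PI ^ 2); [nra|].
  field_simplify; [|nra].
  assert (0 < delta * delta) by nra.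
  assert (27 < PI ^ 3) by nra.
  nra.
Qed.

Lemma RI_bounds_ex (f : R -> R) a b a' b' (pr : Riemann_integrable f a b) :
  a = a' -> b = b' -> exists pr' : Riemann_integrable f a' b', RiemannInt pr' = RiemannInt pr.
Proof. intros; subst. exists pr. reflexivity. Qed.

Lemma theta_shift (f : R -> R) a th (pr : Riemann_integrable f a (a + 2 * PI)) :
  (forall x, f (x + 2 * PI) = f x) -> a - 2 * PI <= - th <= a + 2 * PI ->
  exists pr' : Riemann_integrable (fun psi => f (psi - th)) 0 (2 * PI), RiemannInt pr' = RiemannInt pr.
Proof.
  intros Hp Hth. pose proof PI_RGT_0.
  destruct (RI_periodic_window f (2 * PI) a (- th) pr Hp ltac:(lra) Hth) as [pw Hpw].
  pose (ps := RI_shift f (- th) (- th + 2 * PI) (- th) pw).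
  destruct (RI_bounds_ex _ _ _ 0 (2 * PI) ps ltac:(ring) ltac:(ring)) as [p2 Hp2].
  assert (p3 : Riemann_integrable (fun psi => f (psi - th)) 0 (2 * PI)).
  { apply Riemann_integrable_ext with (2 := p2). intros; f_equal; ring. }
  exists p3. rewrite <- Hpw. unfold ps in Hp2. rewrite RI_shift_val in Hp2. rewrite <- Hp2.
  apply RI_ext_val. intros; f_equal; ring.
Qed.

Lemma cos_2PI_add x : cos (x + 2 * PI) = cos x.
Proof. rewrite cos_plus, cos_2PI, sin_2PI. ring. Qed.

Lemma HkH_periodic delta r x : Hk delta r (HK r) (x + 2 * PI) = Hk delta r (HK r) x.
Proof. unfold Hk, HK, Kf. rewrite cos_2PI_add. reflexivity. Qed.

Lemma HkG_periodic delta r x : Hk delta r GK (x + 2 * PI) = Hk delta r GK x.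
Proof. unfold Hk, GK. rewrite cos_2PI_add. reflexivity. Qed.

Lemma per_theta_H delta M r th : 0 < delta -> (1 <= M)%nat -> r = (INR M - / 2) * delta ->
  - PI <= th <= PI ->
  exists pr : Riemann_integrable (fun psi => Hk delta r (HK r) (psi - th)) 0 (2 * PI),
    RiemannInt pr >= Kt delta r.
Proof.
  intros Hd HM Hr Hth.
  pose proof (r_pos _ _ _ Hd HM Hr) as Hrp.
  assert (Hb : -1 <= (r - delta) / r <= 1) by (apply div_bound; lra).
  destruct (acos_facts _ Hb) as [Hpb Hpc].
  set (p1 := acos ((r - delta) / r)) in *.
  destruct (Nat.eq_dec M 1) as [E1|E1].
  - destruct (window_H1 delta M r Hd HM Hr) as [pw Hpw]. fold p1 in pw, Hpw.
    pose proof (Ilb_M1 delta M r Hd E1 Hr) as Hlb. fold p1 in Hlb.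
    assert (Ep : p1 = PI).
    { unfold p1. subst M. simpl in Hr.
      replace ((r - delta) / r) with (Ropp 1) by (rewrite Hr; field; lra).
      rewrite acos_opp, acos_1; ring. }
    destruct (RI_bounds_ex _ _ _ (- p1) (- p1 + 2 * PI) pw eq_refl ltac:(lra)) as [p2 Hp2].
    destruct (theta_shift _ (- p1) th p2 (HkH_periodic _ _) ltac:(lra)) as [p3 Hp3].
    exists p3. lra.
  - assert (HM2 : (2 <= M)%nat) by lia.
    destruct (window_H delta M r Hd HM2 Hr) as [pw Hpw]. fold p1 in pw, Hpw.
    pose proof (Ilb_M2 delta M r Hd HM2 Hr) as Hlb. fold p1 in Hlb.
    destruct (RI_bounds_ex _ _ _ (- PI + p1) (- PI + p1 + 2 * PI) pw eq_refl ltac:(ring)) as [p2 Hp2].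
    destruct (theta_shift _ (- PI + p1) th p2 (HkH_periodic _ _) ltac:(lra)) as [p3 Hp3].
    exists p3. lra.
Qed.

Lemma per_theta_G delta M r th : 0 < delta -> (1 <= M)%nat -> r = (INR M - / 2) * delta ->
  - PI <= th <= PI ->
  exists pr : Riemann_integrable (fun psi => Hk delta r GK (psi - th)) 0 (2 * PI), True.
Proof.
  intros Hd HM Hr Hth.
  pose proof (r_pos _ _ _ Hd HM Hr) as Hrp.
  assert (Hb : -1 <= (r - delta) / r <= 1) by (apply div_bound; lra).
  destruct (acos_facts _ Hb) as [Hpb Hpc].
  set (p1 := acos ((r - delta) / r)) in *.
  destruct (Nat.eq_dec M 1) as [E1|E1].
  - pose (pw := window_G1 delta M r Hd HM Hr). fold p1 in pw.
    assert (Ep : p1 = PI).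
    { unfold p1. subst M. simpl in Hr.
      replace ((r - delta) / r) with (Ropp 1) by (rewrite Hr; field; lra).
      rewrite acos_opp, acos_1; ring. }
    destruct (RI_bounds_ex _ _ _ (- p1) (- p1 + 2 * PI) pw eq_refl ltac:(lra)) as [p2 Hp2].
    destruct (theta_shift _ (- p1) th p2 (HkG_periodic _ _) ltac:(lra)) as [p3 Hp3].
    exists p3. trivial.
  - assert (HM2 : (2 <= M)%nat) by lia.
    pose (pw := window_G delta M r Hd HM2 Hr). fold p1 in pw.
    destruct (RI_bounds_ex _ _ _ (- PI + p1) (- PI + p1 + 2 * PI) pw eq_refl ltac:(ring)) as [p2 Hp2].
    destruct (theta_shift _ (- PI + p1) th p2 (HkG_periodic _ _) ltac:(lra)) as [p3 Hp3].
    exists p3. trivial.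
Qed.

Definition lsum (l : list nat) (f : nat -> R) : R := fold_right Rplus 0 (map f l).

Lemma sumN_lsum N f : sumN N f = lsum (seq 0 N) f.
Proof. reflexivity. Qed.

Lemma lsum_ext l f g : (forall j, In j l -> f j = g j) -> lsum l f = lsum l g.
Proof.
  induction l as [|a l IH]; intros H; simpl; [reflexivity|].
  unfold lsum in *; simpl. rewrite H by (left; auto). rewrite IH; auto.
  intros; apply H; right; auto.
Qed.

Lemma lsum_plus l f g : lsum l (fun j => f j + g j) = lsum l f + lsum l g.
Proof. induction l; unfold lsum in *; simpl; [ring|]. rewrite IHl. ring. Qed.

Lemma lsum_scal l k f : lsum l (fun j => k * f j) = k * lsum l f.
Proof. induction l; unfold lsum in *; simpl; [ring|]. rewrite IHl. ring. Qed.

Lemma lsum_const l c : lsum l (fun _ => c) = INR (length l) * c.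
Proof.
  induction l; [unfold lsum; simpl; ring|].
  change (length (a :: l)) with (S (length l)). rewrite S_INR.
  unfold lsum in *; simpl. rewrite IHl. ring.
Qed.

Lemma lsum_abs l f C : (forall j, In j l -> Rabs (f j) <= C) ->
  Rabs (lsum l f) <= INR (length l) * C.
Proof.
  induction l as [|a l IH]; intros H.
  - unfold lsum; simpl. rewrite Rabs_R0. lra.
  - change (length (a :: l)) with (S (length l)). rewrite S_INR.
    unfold lsum in *; simpl. eapply Rle_trans; [apply Rabs_triang|].
    assert (Rabs (f a) <= C) by (apply H; left; auto).
    assert (Rabs (fold_right Rplus 0 (map f l)) <= INR (length l) * C) by (apply IH; intros; apply H; right; auto).
    lra.
Qed.

Lemma lsum_ge l f v : (forall j, In j l -> f j >= v j) -> lsum l f >= lsum l v.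
Proof.
  induction l as [|a l IH]; intros H; unfold lsum in *; simpl; [lra|].
  assert (f a >= v a) by (apply H; left; auto).
  assert (fold_right Rplus 0 (map f l) >= fold_right Rplus 0 (map v l)) by (apply IH; intros; apply H; right; auto).
  lra.
Qed.

Lemma RI_lsum (F : nat -> R -> R) a b l v :
  (forall j, In j l -> exists pr : Riemann_integrable (F j) a b, RiemannInt pr >= v j) ->
  exists pr : Riemann_integrable (fun x => lsum l (fun j => F j x)) a b, RiemannInt pr >= lsum l v.
Proof.
  induction l as [|j l IH]; intros H.
  - exists (RiemannInt_P14 a b 0).
    pose proof (RiemannInt_P15 (RiemannInt_P14 a b 0)) as E. rewrite Rmult_0_l in E.
    unfold lsum; simpl. apply Req_ge. exact E.
  - destruct (H j (or_introl eq_refl)) as [p1 H1].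
    destruct IH as [p2 H2]. { intros; apply H; right; auto. }
    pose (p3 := RiemannInt_P10 1 p1 p2).
    assert (p4 : Riemann_integrable (fun x => lsum (j :: l) (fun j0 => F j0 x)) a b).
    { apply Riemann_integrable_ext with (2 := p3). intros; unfold lsum; simpl; ring. }
    exists p4. rewrite (RI_ext_val _ (fun x => F j x + 1 * lsum l (fun j0 => F j0 x)) a b p4 p3).
    + unfold p3. rewrite RiemannInt_P13 with (pr1 := p1) (pr2 := p2). unfold lsum in *; simpl. lra.
    + intros; unfold lsum; simpl; ring.
Qed.

Lemma RI_lsum0 (F : nat -> R -> R) a b l :
  (forall j, In j l -> exists pr : Riemann_integrable (F j) a b, True) ->
  exists pr : Riemann_integrable (fun x => lsum l (fun j => F j x)) a b, True.
Proof.
  induction l as [|j l IH]; intros H.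
  - exists (RiemannInt_P14 a b 0). trivial.
  - destruct (H j (or_introl eq_refl)) as [p1 _].
    destruct IH as [p2 _]. { intros; apply H; right; auto. }
    pose (p3 := RiemannInt_P10 1 p1 p2).
    assert (p4 : Riemann_integrable (fun x => lsum (j :: l) (fun j0 => F j0 x)) a b).
    { apply Riemann_integrable_ext with (2 := p3). intros; unfold lsum; simpl; ring. }
    exists p4; trivial.
Qed.

Lemma angle_exists x y : x * x + y * y = 1 ->
  exists th, - PI <= th <= PI /\ cos th = x /\ sin th = y.
Proof.
  intros H.
  assert (Hx : -1 <= x <= 1) by nra.
  destruct (acos_facts x Hx) as [Hb Hc].
  assert (Hs : sin (acos x) = Rabs y).
  { rewrite sin_acos by exact Hx. rewrite <- sqrt_Rsqr_abs. f_equal. unfold Rsqr. lra. }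
  destruct (Rle_dec 0 y) as [Hy|Hy].
  - exists (acos x). split; [lra|]. split; auto. rewrite Hs, Rabs_right; lra.
  - exists (- acos x). split; [lra|]. rewrite cos_neg, sin_neg, Hs, Rabs_left; [split; auto; ring | lra].
Qed.

Lemma t_rot r x y th psi : cos th = x -> sin th = y ->
  r * cos psi * x + r * sin psi * y = r * cos (psi - th).
Proof. intros Hc Hs. rewrite cos_minus, Hc, Hs. ring. Qed.

Lemma per_j_G delta M r x y : 0 < delta -> (1 <= M)%nat -> r = (INR M - / 2) * delta ->
  x * x + y * y = 1 ->
  exists pr : Riemann_integrable (fun psi => Qd delta (r * cos psi * x + r * sin psi * y)) 0 (2 * PI), True.
Proof.
  intros Hd HM Hr Hxy.
  destruct (angle_exists x y Hxy) as [th [Hth [Hc Hs]]].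
  destruct (per_theta_G delta M r th Hd HM Hr Hth) as [p _].
  assert (p' : Riemann_integrable (fun psi => Qd delta (r * cos psi * x + r * sin psi * y)) 0 (2 * PI)).
  { apply Riemann_integrable_ext with (2 := p). intros z _. unfold Hk, GK.
    rewrite (t_rot r x y th z Hc Hs). reflexivity. }
  exists p'; trivial.
Qed.

Definition hfun delta (t : R) : R := t * (t - Qd delta t).

Lemma per_j_H delta M r x y : 0 < delta -> (1 <= M)%nat -> r = (INR M - / 2) * delta ->
  x * x + y * y = 1 ->
  exists pr : Riemann_integrable (fun psi => hfun delta (r * cos psi * x + r * sin psi * y)) 0 (2 * PI),
    RiemannInt pr >= Kt delta r.
Proof.
  intros Hd HM Hr Hxy.
  destruct (angle_exists x y Hxy) as [th [Hth [Hc Hs]]].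
  destruct (per_theta_H delta M r th Hd HM Hr Hth) as [p Hp].
  assert (Hext : forall z, Hk delta r (HK r) (z - th) = hfun delta (r * cos z * x + r * sin z * y)).
  { intros z. unfold Hk, HK, Kf, hfun. rewrite (t_rot r x y th z Hc Hs). ring. }
  assert (p' : Riemann_integrable (fun psi => hfun delta (r * cos psi * x + r * sin psi * y)) 0 (2 * PI)).
  { apply Riemann_integrable_ext with (2 := p). intros z _. apply Hext. }
  exists p'. rewrite (RI_ext_val _ _ _ _ p' p). exact Hp. intros; symmetry; apply Hext.
Qed.

Definition clamp B x := Rmax (- B) (Rmin B x).

Lemma clamp_lip B x y : 0 <= B -> Rabs (clamp B x - clamp B y) <= Rabs (x - y).
Proof.
  intros HB. pose proof (Rle_abs (x - y)). pose proof (Rle_abs (- (x - y))).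
  rewrite Rabs_Ropp in H0. apply Rabs_le. unfold clamp, Rmax, Rmin.
  destruct (Rle_dec B x); destruct (Rle_dec B y);
  repeat match goal with |- context [Rle_dec ?a ?b] => destruct (Rle_dec a b) | H : context [Rle_dec ?a ?b] |- _ => destruct (Rle_dec a b) end; split; lra.
Qed.

Lemma clamp_bound B x : 0 <= B -> Rabs (clamp B x) <= B.
Proof.
  intros HB. unfold clamp, Rmax, Rmin.
  repeat match goal with |- context [Rle_dec ?a ?b] => destruct (Rle_dec a b) | H : context [Rle_dec ?a ?b] |- _ => destruct (Rle_dec a b) end;
  unfold Rabs; repeat match goal with |- context [Rcase_abs ?a] => destruct (Rcase_abs a) end; lra.
Qed.

Lemma clamp_id B x : Rabs x <= B -> clamp B x = x.
Proof.
  intros H. unfold clamp, Rmax, Rmin. unfold Rabs in H; destruct (Rcase_abs x);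
  repeat match goal with |- context [Rle_dec ?a ?b] => destruct (Rle_dec a b) | H : context [Rle_dec ?a ?b] |- _ => destruct (Rle_dec a b) end; try reflexivity; apply Rle_antisym; lra.
Qed.

Lemma RI_sq (f : R -> R) a b B : 0 <= B -> (forall x, Rabs (f x) <= B) ->
  Riemann_integrable f a b -> Riemann_integrable (fun x => f x * f x) a b.
Proof.
  intros HB Hf pr.
  assert (Hl : forall x y, Rabs (clamp B x * clamp B x - clamp B y * clamp B y) <= 2 * B * Rabs (x - y)).
  { intros x y.
    pose proof (clamp_lip B x y HB). pose proof (clamp_bound B x HB). pose proof (clamp_bound B y HB).
    replace (clamp B x * clamp B x - clamp B y * clamp B y) with
      ((clamp B x - clamp B y) * (clamp B x + clamp B y)) by ring.
    rewrite Rabs_mult.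
    assert (Rabs (clamp B x + clamp B y) <= 2 * B).
    { eapply Rle_trans; [apply Rabs_triang|lra]. }
    assert (0 <= Rabs (clamp B x - clamp B y)) by apply Rabs_pos.
    assert (0 <= Rabs (clamp B x + clamp B y)) by apply Rabs_pos.
    nra. }
  pose proof (RI_comp_lip f (fun z => clamp B z * clamp B z) a b (2 * B) ltac:(lra) Hl pr) as p.
  apply Riemann_integrable_ext with (2 := p).
  intros x _. rewrite clamp_id by apply Hf. reflexivity.
Qed.

Lemma RI_scal_ge (f : R -> R) a b k v : 0 <= k ->
  (exists pr : Riemann_integrable f a b, RiemannInt pr >= v) ->
  exists pr : Riemann_integrable (fun x => k * f x) a b, RiemannInt pr >= k * v.
Proof.
  intros Hk [p Hp].
  pose (p0 := RiemannInt_P14 a b 0).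
  pose (p1 := RiemannInt_P10 k p0 p).
  assert (p2 : Riemann_integrable (fun x => k * f x) a b).
  { apply Riemann_integrable_ext with (2 := p1). intros; unfold fct_cte; ring. }
  exists p2. rewrite (RI_ext_val _ (fun x => fct_cte 0 x + k * f x) _ _ p2 p1).
  - unfold p1. rewrite (RiemannInt_P13 p0 p). unfold p0. rewrite RiemannInt_P15.
    assert (k * RiemannInt p >= k * v) by (apply Rle_ge, Rmult_le_compat_l; lra). lra.
  - intros; unfold fct_cte; ring.
Qed.

Lemma RI_addc_ge (f : R -> R) a b c v :
  (exists pr : Riemann_integrable f a b, RiemannInt pr >= v) ->
  exists pr : Riemann_integrable (fun x => f x + c) a b, RiemannInt pr >= v + c * (b - a).
Proof.
  intros [p Hp].
  pose (p0 := RiemannInt_P14 a b c).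
  pose (p1 := RiemannInt_P10 1 p p0).
  assert (p2 : Riemann_integrable (fun x => f x + c) a b).
  { apply Riemann_integrable_ext with (2 := p1). intros; unfold fct_cte; ring. }
  exists p2. rewrite (RI_ext_val _ (fun x => f x + 1 * fct_cte c x) _ _ p2 p1).
  - unfold p1. rewrite (RiemannInt_P13 p p0). unfold p0. rewrite RiemannInt_P15. lra.
  - intros; unfold fct_cte; ring.
Qed.

Lemma frame_identity r N (ex ey c : nat -> R) psi : 0 < r -> (1 <= N)%nat ->
  sumN N (fun j => ex j * ex j) = INR N / 2 ->
  sumN N (fun j => ex j * ey j) = 0 ->
  sumN N (fun j => ey j * ex j) = 0 ->
  sumN N (fun j => ey j * ey j) = INR N / 2 ->
  (r * cos psi - 2 / INR N * sumN N (fun j => c j * ex j)) * cos psi +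
  (r * sin psi - 2 / INR N * sumN N (fun j => c j * ey j)) * sin psi =
  2 / (INR N * r) * sumN N (fun j => (r * cos psi * ex j + r * sin psi * ey j) *
                                   ((r * cos psi * ex j + r * sin psi * ey j) - c j)).
Proof.
  intros Hr HN Sxx Sxy Syx Syy.
  rewrite !sumN_lsum in *.
  set (A := r * cos psi * (r * cos psi)). set (B := r * cos psi * (r * sin psi)).
  set (D := r * sin psi * (r * sin psi)).
  rewrite (lsum_ext _ (fun j => (r * cos psi * ex j + r * sin psi * ey j) *
                                   ((r * cos psi * ex j + r * sin psi * ey j) - c j))
     (fun j => A * (ex j * ex j) + (B * (ex j * ey j) + (B * (ey j * ex j) +
      (D * (ey j * ey j) + (- (r * cos psi) * (c j * ex j) + - (r * sin psi) * (c j * ey j))))))).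
  2: { intros; unfold A, B, D; ring. }
  rewrite !lsum_plus, !lsum_scal. rewrite Sxx, Sxy, Syx, Syy.
  assert (HN' : 0 < INR N) by (apply lt_0_INR; lia).
  pose proof (sin2_cos2 psi) as Hsc. unfold Rsqr in Hsc.
  unfold A, B, D. field_simplify; [|lra|lra].
  replace (cos psi ^ 2) with (1 - sin psi ^ 2) by (simpl; lra).
  field. lra.
Qed.

Lemma T_identity delta r : 0 < delta -> 0 < r ->
  let T := 32 / (3 * Rpower PI (5 / 2)) * (Rpower delta (3 / 2) / sqrt r) in
  Kt delta r = r * T * sqrt (2 * PI) / 2.
Proof.
  intros Hd Hr T. unfold T, Kt.
  pose proof PI_RGT_0 as Hpi.
  assert (E1 : Rpower PI (5 / 2) = PI ^ 2 * sqrt PI).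
  { replace (5 / 2) with (INR 2 + / 2) by (simpl; field).
    rewrite Rpower_plus, Rpower_pow, Rpower_sqrt; auto. }
  assert (E2 : Rpower delta (3 / 2) = delta * sqrt delta).
  { replace (3 / 2) with (INR 1 + / 2) by (simpl; field).
    rewrite Rpower_plus, Rpower_pow, Rpower_sqrt; auto. simpl; ring. }
  rewrite E1, E2. rewrite sqrt_mult by lra.
  assert (Hr2 : sqrt r * sqrt r = r) by (apply sqrt_sqrt; lra).
  assert (0 < sqrt r) by (apply sqrt_lt_R0; lra).
  assert (0 < sqrt PI) by (apply sqrt_lt_R0; lra).
  rewrite <- Hr2 at 2. field. split; lra.
Qed.

Lemma cs_bound a b x y : x * x + y * y = 1 -> a * a + b * b = 1 -> Rabs (a * x + b * y) <= 1.
Proof.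
  intros H1 H2. apply Rabs_le.
  assert (E : (a * x + b * y) * (a * x + b * y) + (a * y - b * x) * (a * y - b * x) = (a * a + b * b) * (x * x + y * y)) by ring.
  rewrite H1, H2 in E. pose proof (Rle_0_sqr (a * y - b * x)). unfold Rsqr in H.
  assert ((a * x + b * y) * (a * x + b * y) <= 1) by lra. split; nra.
Qed.

Lemma Rabs_le_inv' a b : Rabs a <= b -> -b <= a <= b.
Proof.
  intros H. pose proof (Rle_abs a). pose proof (Rle_abs (- a)). rewrite Rabs_Ropp in H1. lra.
Qed.

Theorem theorem1p2 (r delta : R) (N : nat) (ex ey : nat -> R) :
  0 < r -> 0 < delta ->
  (exists k : Z, r / delta + / 2 = IZR k) ->
  (1 <= N)%nat ->
  is_UNTF N ex ey ->
  exists pr : Riemann_integrable (Esq_integrand delta r N ex ey) 0 (2 * PI),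
    sqrt (RiemannInt pr) >=
      32 / (3 * Rpower PI (5 / 2)) * (Rpower delta (3 / 2) / sqrt r).
Proof.
  intros Hr Hd [k Hk] HN [Hnorm [Sxx [Sxy [Syx Syy]]]].
  pose proof PI_RGT_0 as Hpi.
  assert (Hk1 : (1 <= k)%Z).
  { destruct (Z_le_gt_dec 1 k) as [h|h]; [exact h|exfalso].
    assert (k <= 0)%Z by lia. apply IZR_le in H. simpl in H.
    assert (0 < r / delta) by (apply Rdiv_lt_0_compat; lra). lra. }
  set (M := Z.to_nat k).
  assert (HM : (1 <= M)%nat) by (unfold M; lia).
  assert (HrM : r = (INR M - / 2) * delta).
  { unfold M. rewrite INR_IZR_INZ, Z2Nat.id by lia. rewrite <- Hk. field. lra. }
  assert (Hu : forall j, (j < N)%nat -> ex j * ex j + ey j * ey j = 1).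
  { intros j Hj. specialize (Hnorm j Hj).
    assert (0 <= ex j ^ 2 + ey j ^ 2) by nra.
    pose proof (sqrt_lem_0 _ 1 H ltac:(lra) Hnorm). simpl in H0. lra. }
  assert (HNpos : 0 < INR N) by (apply lt_0_INR; lia).
  set (c := fun j psi => Qd delta (r * cos psi * ex j + r * sin psi * ey j)).
  set (y1 := fun psi => r * cos psi - 2 / INR N * sumN N (fun j => c j psi * ex j)).
  set (y2 := fun psi => r * sin psi - 2 / INR N * sumN N (fun j => c j psi * ey j)).
  assert (Eq : forall psi, Esq_integrand delta r N ex ey psi = y1 psi * y1 psi + y2 psi * y2 psi).
  { intros psi. unfold Esq_integrand, Edelta. cbv beta zeta.
    rewrite pow2_sqrt by (apply Rplus_le_le_0_compat; apply pow2_ge_0). unfold y1, y2, c. ring. }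
  assert (Ht : forall j psi, (j < N)%nat -> Rabs (r * cos psi * ex j + r * sin psi * ey j) <= r).
  { intros j psi Hj.
    replace (r * cos psi * ex j + r * sin psi * ey j) with (r * (cos psi * ex j + sin psi * ey j)) by ring.
    rewrite Rabs_mult, Rabs_right by lra.
    pose proof (cs_bound (cos psi) (sin psi) (ex j) (ey j) (Hu j Hj)).
    assert (cos psi * cos psi + sin psi * sin psi = 1) by (pose proof (sin2_cos2 psi); unfold Rsqr in *; lra).
    specialize (H H0). nra. }
  assert (Hcb : forall j psi, (j < N)%nat -> Rabs (c j psi) <= r + delta).
  { intros j psi Hj. unfold c.
    pose proof (Qd_bounds delta (r * cos psi * ex j + r * sin psi * ey j) Hd).
    pose proof (Ht j psi Hj).
    apply Rabs_le. apply Rabs_le_inv' in H0. lra. }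
  assert (Hexb : forall j, (j < N)%nat -> Rabs (ex j) <= 1 /\ Rabs (ey j) <= 1).
  { intros j Hj. pose proof (Hu j Hj). split; apply Rabs_le; split; nra. }
  assert (Hsb : forall psi (e : nat -> R), (forall j, (j < N)%nat -> Rabs (e j) <= 1) ->
            Rabs (sumN N (fun j => c j psi * e j)) <= INR N * (r + delta)).
  { intros psi e He. rewrite sumN_lsum.
    rewrite <- (length_seq N 0) at 2. apply lsum_abs.
    intros j Hj. apply in_seq in Hj. rewrite Rabs_mult.
    pose proof (Hcb j psi ltac:(lia)). pose proof (He j ltac:(lia)).
    pose proof (Rabs_pos (c j psi)). pose proof (Rabs_pos (e j)). nra. }
  assert (Hy1b : forall psi, Rabs (y1 psi) <= 3 * r + 2 * delta).
  { intros psi. unfold y1.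
    pose proof (Hsb psi ex (fun j Hj => proj1 (Hexb j Hj))).
    eapply Rle_trans; [apply Rabs_triang|]. rewrite Rabs_Ropp, !Rabs_mult.
    rewrite (Rabs_right (2 / INR N)) by (apply Rle_ge, Rlt_le, Rdiv_lt_0_compat; lra).
    rewrite (Rabs_right r) by lra.
    assert (Rabs (cos psi) <= 1) by (apply Rabs_le; apply COS_bound).
    assert (Hq : 2 / INR N * Rabs (sumN N (fun j => c j psi * ex j)) <= 2 / INR N * (INR N * (r + delta))).
    { apply Rmult_le_compat_l; [apply Rlt_le, Rdiv_lt_0_compat; lra | exact H]. }
    replace (2 / INR N * (INR N * (r + delta))) with (2 * (r + delta)) in Hq by (field; lra).
    assert (r * Rabs (cos psi) <= r) by nra. lra. }
  assert (Hy2b : forall psi, Rabs (y2 psi) <= 3 * r + 2 * delta).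
  { intros psi. unfold y2.
    pose proof (Hsb psi ey (fun j Hj => proj2 (Hexb j Hj))).
    eapply Rle_trans; [apply Rabs_triang|]. rewrite Rabs_Ropp, !Rabs_mult.
    rewrite (Rabs_right (2 / INR N)) by (apply Rle_ge, Rlt_le, Rdiv_lt_0_compat; lra).
    rewrite (Rabs_right r) by lra.
    assert (Rabs (sin psi) <= 1) by (apply Rabs_le; apply SIN_bound).
    assert (Hq : 2 / INR N * Rabs (sumN N (fun j => c j psi * ey j)) <= 2 / INR N * (INR N * (r + delta))).
    { apply Rmult_le_compat_l; [apply Rlt_le, Rdiv_lt_0_compat; lra | exact H]. }
    replace (2 / INR N * (INR N * (r + delta))) with (2 * (r + delta)) in Hq by (field; lra).
    assert (r * Rabs (sin psi) <= r) by nra. lra. }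
  assert (H2pi : 0 <= 2 * PI) by lra.
  assert (Iy1 : exists pr : Riemann_integrable y1 0 (2 * PI), True).
  { destruct (RI_lsum0 (fun j psi => c j psi * ex j) 0 (2 * PI) (seq 0 N)) as [ps _].
    - intros j Hj. apply in_seq in Hj.
      destruct (per_j_G delta M r (ex j) (ey j) Hd HM HrM (Hu j ltac:(lia))) as [p _].
      pose proof (@Riemann_integrable_scal _ _ _ (ex j) p) as p'.
      assert (p'' : Riemann_integrable (fun psi => c j psi * ex j) 0 (2 * PI)).
      { apply Riemann_integrable_ext with (2 := p'). intros; unfold c; ring. }
      exists p''; trivial.
    - pose (pc := continuity_implies_RiemannInt (f := fun x => r * cos x) H2pi (fun x _ => ltac:(reg))).
      pose proof (RiemannInt_P10 (- (2 / INR N)) pc ps) as p.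
      assert (p' : Riemann_integrable y1 0 (2 * PI)).
      { apply Riemann_integrable_ext with (2 := p). intros; unfold y1; rewrite sumN_lsum; ring. }
      exists p'; trivial. }
  assert (Iy2 : exists pr : Riemann_integrable y2 0 (2 * PI), True).
  { destruct (RI_lsum0 (fun j psi => c j psi * ey j) 0 (2 * PI) (seq 0 N)) as [ps _].
    - intros j Hj. apply in_seq in Hj.
      destruct (per_j_G delta M r (ex j) (ey j) Hd HM HrM (Hu j ltac:(lia))) as [p _].
      pose proof (@Riemann_integrable_scal _ _ _ (ey j) p) as p'.
      assert (p'' : Riemann_integrable (fun psi => c j psi * ey j) 0 (2 * PI)).
      { apply Riemann_integrable_ext with (2 := p'). intros; unfold c; ring. }
      exists p''; trivial.
    - pose (pc := continuity_implies_RiemannInt (f := fun x => r * sin x) H2pi (fun x _ => ltac:(reg))).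
      pose proof (RiemannInt_P10 (- (2 / INR N)) pc ps) as p.
      assert (p' : Riemann_integrable y2 0 (2 * PI)).
      { apply Riemann_integrable_ext with (2 := p). intros; unfold y2; rewrite sumN_lsum; ring. }
      exists p'; trivial. }
  destruct Iy1 as [py1 _]. destruct Iy2 as [py2 _].
  assert (pE : Riemann_integrable (Esq_integrand delta r N ex ey) 0 (2 * PI)).
  { pose proof (RI_sq y1 0 (2 * PI) (3 * r + 2 * delta) ltac:(lra) Hy1b py1) as q1.
    pose proof (RI_sq y2 0 (2 * PI) (3 * r + 2 * delta) ltac:(lra) Hy2b py2) as q2.
    pose proof (RiemannInt_P10 1 q1 q2) as q.
    apply Riemann_integrable_ext with (2 := q). intros; rewrite Eq; ring. }
  exists pE.
  set (T := 32 / (3 * Rpower PI (5 / 2)) * (Rpower delta (3 / 2) / sqrt r)).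
  assert (HT0 : 0 <= T).
  { unfold T. unfold Rpower. assert (0 < sqrt r) by (apply sqrt_lt_R0; lra).
    pose proof (exp_pos (5 / 2 * ln PI)). pose proof (exp_pos (3 / 2 * ln delta)).
    apply Rmult_le_pos; apply Rlt_le; apply Rdiv_lt_0_compat; lra. }
  pose proof (T_identity delta r Hd Hr) as HKt. fold T in HKt.
  set (s2 := sqrt (2 * PI)).
  assert (Hs2 : s2 * s2 = 2 * PI) by (apply sqrt_sqrt; lra).
  assert (Hs20 : 0 < s2) by (apply sqrt_lt_R0; lra).
  set (kap := T / s2).
  assert (Hkap : 0 <= kap) by (unfold kap; apply Rmult_le_pos; [lra| apply Rlt_le, Rinv_0_lt_compat; lra]).
  set (kk := 2 * kap * (2 / (INR N * r))).
  assert (Hkk : 0 <= kk).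
  { unfold kk. apply Rmult_le_pos; [lra|]. apply Rlt_le, Rdiv_lt_0_compat; [lra|nra]. }
  set (hj := fun j psi => hfun delta (r * cos psi * ex j + r * sin psi * ey j)).
  destruct (RI_lsum hj 0 (2 * PI) (seq 0 N) (fun _ => Kt delta r)) as [pS HS].
  { intros j Hj. apply in_seq in Hj.
    apply (per_j_H delta M r (ex j) (ey j) Hd HM HrM (Hu j ltac:(lia))). }
  rewrite lsum_const, length_seq in HS.
  destruct (RI_addc_ge (fun x => kk * lsum (seq 0 N) (fun j => hj j x)) 0 (2 * PI) (- (kap * kap))
              (kk * (INR N * Kt delta r))) as [pPhi HPhi].
  { apply RI_scal_ge; auto. exists pS; exact HS. }
  assert (Hpt : forall x, 0 < x < 2 * PI ->
     kk * lsum (seq 0 N) (fun j => hj j x) + - (kap * kap) <= Esq_integrand delta r N ex ey x).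
  { intros x _. rewrite Eq.
    pose proof (frame_identity r N ex ey (fun j => c j x) x Hr HN Sxx Sxy Syx Syy) as Hf.
    assert (HF : y1 x * cos x + y2 x * sin x = 2 / (INR N * r) * lsum (seq 0 N) (fun j => hj j x)).
    { unfold y1, y2. rewrite Hf. rewrite sumN_lsum. unfold hj, hfun, c. reflexivity. }
    set (Fx := y1 x * cos x + y2 x * sin x) in *.
    assert (Hcs : Fx * Fx <= y1 x * y1 x + y2 x * y2 x).
    { unfold Fx. pose proof (sin2_cos2 x). unfold Rsqr in H.
      pose proof (Rle_0_sqr (y1 x * sin x - y2 x * cos x)). unfold Rsqr in H0.
      assert (E : (y1 x * cos x + y2 x * sin x) * (y1 x * cos x + y2 x * sin x) +
                  (y1 x * sin x - y2 x * cos x) * (y1 x * sin x - y2 x * cos x) =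
                  (y1 x * y1 x + y2 x * y2 x) * (sin x * sin x + cos x * cos x)) by ring.
      rewrite H, Rmult_1_r in E. lra. }
    assert (Hq : kk * lsum (seq 0 N) (fun j => hj j x) = 2 * kap * Fx).
    { unfold kk. rewrite HF. ring. }
    rewrite Hq. pose proof (Rle_0_sqr (Fx - kap)). unfold Rsqr in H. nra. }
  pose proof (RiemannInt_P19 pPhi pE H2pi Hpt) as Hcmp.
  assert (Hval : kk * (INR N * Kt delta r) + - (kap * kap) * (2 * PI - 0) = T * T).
  { rewrite HKt. fold s2. unfold kk, kap. replace (2 * PI - 0) with (s2 * s2) by lra. field. split; [lra|]. split; lra. }
  rewrite Hval in HPhi.
  apply Rle_ge. rewrite <- (sqrt_square T) by exact HT0.
  apply sqrt_le_1_alt. lra.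
Qed.
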